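(* Let $q$ be prime and let $S\in\mathbb{Z}_q^{k\times 2n}$ be the generator matrix of a non-degenerate stabilizer code $[[n,n-k,d]]_q$. Let $M\in\mathbb{Z}^{k\times 2n}$ be an invariant form of this code (i.e. $M\equiv S\pmod q$ and the rows of $M$ pairwise have integer symplectic product $0$), and let $B$ be the maximal absolute value of an entry of $M$. Set $$p^*=B^{2(d-1)}\,\bigl(2(d-1)\bigr)^{d-1}.$$ Then for every prime $p>p^*$, the code over $p$ levels given by the generator matrix $M \bmod p$, with parameters $[[n,n-k,d']]_p$, has distance $d'\ge d$.
   Context: For a prime $r$, $n$-qudit Paulis over $r$ levels (up to phase) are represented as vectors $(a|b)\in\mathbb{Z}_r^{2n}$ (exponents of $X$ and $Z$ on each qudit). The symplectic product of $u=(u_x|u_z)$ and $v=(v_x|v_z)$ is $u\odot v=\sum_{l=1}^n (v_{z,l}u_{x,l}-v_{x,l}u_{z,l})$, computed mod $r$ (or over $\mathbb{Z}$ for integer vectors). The weight of $(a|b)$ is the number of indices $l$ with $(a_l,b_l)\neq(0,0)$. For a stabilizer code over $r$ levels with generator matrix $G$ (rows pairwise symplectically orthogonal mod $r$), the distance is the minimum weight of a nonzero $e\in\mathbb{Z}_r^{2n}$ with $e\odot g\equiv 0\pmod r$ for every row $g$ of $G$ (an undetectable error). The code is non-degenerate if every non-identity element of the stabilizer group has weight at least $d$. The code has $k$ generators on $n$ qudits, hence $n-k$ logical qudits; notation $[[n,n-k,d]]_q$. *)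

(* Defs.v *)
(* Paulis on n qudits are integer row vectors of length n + n:
   index (lshift n l) is the X-exponent on qudit l, (rshift n l) the Z-exponent.
   Vectors over Z_r are represented by integer vectors, read modulo r. *)
From HB Require Import structures.
From mathcomp Require Import all_boot all_order all_algebra.
Set Implicit Arguments. Unset Strict Implicit. Unset Printing Implicit Defensive.
Import Order.TTheory GRing.Theory Num.Theory.
Local Open Scope ring_scope.

Definition sympl (n : nat) (u v : 'rV[int]_(n + n)) : int :=
  \sum_(l < n) (v ord0 (rshift n l) * u ord0 (lshift n l)
                - v ord0 (lshift n l) * u ord0 (rshift n l)).

Definition wt (r : nat) (n : nat) (u : 'rV[int]_(n + n)) : nat :=
  #|[set l : 'I_n | ((u ord0 (lshift n l) %% r%:Z)%Z != 0)
                  || ((u ord0 (rshift n l) %% r%:Z)%Z != 0)]|.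

Definition nonzero_mod (r : nat) (m : nat) (u : 'rV[int]_m) : bool :=
  [exists j, (u ord0 j %% r%:Z)%Z != 0].

Definition stabilizer_gen (r k n : nat) (G : 'M[int]_(k, n + n)) : Prop :=
  forall i j : 'I_k, (sympl (row i G) (row j G) %% r%:Z)%Z = 0.

Definition undetectable (r k n : nat) (G : 'M[int]_(k, n + n))
    (e : 'rV[int]_(n + n)) : Prop :=
  nonzero_mod r e /\ forall i : 'I_k, (sympl e (row i G) %% r%:Z)%Z = 0.

Definition has_distance (r k n : nat) (G : 'M[int]_(k, n + n)) (d : nat) : Prop :=
  (exists e, undetectable r G e /\ wt r e = d) /\
  (forall e, undetectable r G e -> (d <= wt r e)%N).

Definition nondeg_code (r k n : nat) (G : 'M[int]_(k, n + n)) (d : nat) : Prop :=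
  forall c : 'rV[int]_k, nonzero_mod r (c *m G) -> (d <= wt r (c *m G))%N.

Definition invariant_form (q k n : nat) (S M : 'M[int]_(k, n + n)) : Prop :=
  (forall i j, ((M i j - S i j) %% q%:Z)%Z = 0) /\
  (forall i j : 'I_k, sympl (row i M) (row j M) = 0).

Definition maxabs (k m : nat) (M : 'M[int]_(k, m)) : nat :=
  \max_(i < k) \max_(j < m) `|M i j|%N.

(* Main.v *)
Require Import Defs.
From HB Require Import structures.
From mathcomp Require Import all_boot all_order all_algebra.
Import Order.TTheory GRing.Theory Num.Theory.
From mathcomp Require Import zify.
Set Implicit Arguments. Unset Strict Implicit. Unset Printing Implicit Defensive.
Local Open Scope ring_scope.
Section Had.
Variable R : realFieldType.

Lemma gram_diag r m (N : 'M[R]_(r,m)) i : (N^T *m N) i i = \sum_j N j i ^+ 2.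
Proof. by rewrite !mxE; apply: eq_bigr => j _; rewrite !mxE expr2. Qed.

Lemma gram_diag_ge0 r m (N : 'M[R]_(r,m)) i : 0 <= (N^T *m N) i i.
Proof. by rewrite gram_diag; apply: sumr_ge0 => j _; apply: sqr_ge0. Qed.

Lemma hadamard_gram m : forall r (N : 'M[R]_(r, m)),
  \det (N^T *m N) <= \prod_(i < m) (N^T *m N) i i.
Proof.
elim: m => [|m IH] r N; first by rewrite det_mx00 big_ord0.
move: N; change (forall N : 'M[R]_(r, 1 + m),
  \det (N^T *m N) <= \prod_(i < 1 + m) (N^T *m N) i i) => N.
rewrite -(hsubmxK N).
move: (lsubmx _) (rsubmx _) => n1 N2.
rewrite tr_row_mx mul_col_row big_split_ord big_ord1 /=.
rewrite block_mxEul.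
under eq_bigr => i _ do rewrite block_mxEdr.
set a0 := (n1^T *m n1) 0 0.
have a0ge0 : 0 <= a0 by apply: gram_diag_ge0.
have ea : n1^T *m n1 = a0%:M by apply: mx11_scalar.
set P := n1^T *m N2.
have eP : N2^T *m n1 = P^T by rewrite /P trmx_mul trmxK.
rewrite eP.
have [a00|a0n0] := eqVneq a0 0.
  have n10 : n1 = 0.
    apply/matrixP => i j; rewrite (ord1 j) mxE.
    move: a00; rewrite /a0 gram_diag => /eqP; rewrite psumr_eq0; last first.
      by move=> l _; apply: sqr_ge0.
    by move=> /allP /(_ i (mem_index_enum _)) /implyP /(_ isT) /eqP /eqP; rewrite sqrf_eq0 => /eqP.
  have P0 : P = 0 by rewrite /P n10 trmx0 mul0mx.
  rewrite P0 trmx0 ea a00 det_ublock.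
  rewrite (_ : (0 : R)%:M = 0 :> 'M_1); last by rewrite raddf0.
  by rewrite det0 !mul0r.
have a0gt0 : 0 < a0 by rewrite lt_def a0n0.
set c := a0^-1.
set N' := N2 - n1 *m (c *: P).
have hC : N'^T *m N' = N2^T *m N2 - c *: (P^T *m P).
  have tB : forall (X Y : 'M[R]_(r,m)), (X - Y)^T = X^T - Y^T.
    by move=> X Y; apply/matrixP => i j; rewrite !mxE.
  have tZ : forall (x : R) (X : 'rV[R]_m), (x *: X)^T = x *: X^T.
    by move=> x X; apply/matrixP => i j; rewrite !mxE.
  rewrite /N' tB trmx_mul tZ mulmxBl !mulmxBr.
  have e1 : N2^T *m (n1 *m (c *: P)) = c *: (P^T *m P).
    by rewrite mulmxA eP -scalemxAr.
  have e2 : c *: P^T *m n1^T *m N2 = c *: (P^T *m P).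
    by rewrite -mulmxA -/P -scalemxAl.
  have e3 : c *: P^T *m n1^T *m (n1 *m (c *: P)) = c *: (P^T *m P).
    rewrite -mulmxA (mulmxA n1^T) ea mul_scalar_mx -scalemxAl -!scalemxAr.
    by rewrite !scalerA (_ : c * (a0 * c) = c) //; rewrite /c mulrA mulVf ?mul1r.
  by rewrite e1 e2 e3 subrr subr0.
have hD : \det (block_mx (n1^T *m n1) P P^T (N2^T *m N2)) = a0 * \det (N'^T *m N').
  pose L := block_mx (1%:M : 'M_1) 0 (- c *: P^T) (1%:M : 'M_m).
  have dL : \det L = 1 by rewrite det_lblock !det1 mulr1.
  rewrite -[LHS]mul1r -dL -det_mulmx mulmx_block !mul1mx !mul0mx !addr0.
  rewrite ea mul_mx_scalar scalerA (_ : a0 * - c = -1); last first.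
    by rewrite mulrN /c mulfV.
  rewrite scaleN1r addNr hC -scalemxAl scaleNr addrC det_ublock det_mx11 -ea.
  done.
rewrite hD ler_wpM2l //.
apply: le_trans (IH _ N') _.
apply: ler_prod => i _; rewrite gram_diag_ge0 /= hC !mxE -/(N2^T *m N2) -/(P^T *m P).
rewrite gerBl mulr_ge0 //; first by rewrite /c invr_ge0.
by have := gram_diag_ge0 P i; rewrite mxE.
Qed.
End Had.
Lemma det_intr (R : comNzRingType) m (N : 'M[int]_m) :
  \det (map_mx (intmul (1:R)) N) = (\det N)%:~R.
Proof. by rewrite det_map_mx. Qed.

Lemma hadamard_int m (N : 'M[int]_m) :
  (\det N)^+2 <= \prod_(j < m) \sum_(i < m) (N i j)^+2.
Proof.
have := hadamard_gram (map_mx (intmul (1:rat)) N).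
rewrite det_mulmx det_tr det_intr -expr2.
under eq_bigr do rewrite gram_diag.
under eq_bigr do under eq_bigr do rewrite mxE.
rewrite -rmorphXn /=.
under eq_bigr do under eq_bigr do rewrite -rmorphXn /=.
under eq_bigr do rewrite -rmorph_sum /=.
by rewrite -rmorph_prod /= ler_int.
Qed.

Lemma Fp_int (r : nat) (pr : prime r) (z : int) :
  ((z %% r%:Z)%Z == 0) = (z%:~R == 0 :> 'F_r).
Proof. by rewrite -(dvdz_pcharf (pchar_Fp pr)); apply/eqP/dvdz_mod0P. Qed.

Lemma Fp_natr (r : nat) (pr : prime r) (x : 'F_r) : (x : nat)%:R = x.
Proof.
apply: val_inj; rewrite /= val_Fp_nat // modn_small //.
by apply: (leq_trans (ltn_ord x)); rewrite Fp_cast.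
Qed.

Lemma det_bound m (N : 'M[int]_m) (B : nat) :
  (forall i j, (`|N i j| <= B)%N) -> (`|\det N| ^ 2 <= (m * B ^ 2) ^ m)%N.
Proof.
move=> hB.
have e : forall z : int, z^+2 = Posz (`|z| ^ 2)%N.
  by move=> z; rewrite -abszX gez0_abs // sqr_ge0.
have h := hadamard_int N.
move: h; rewrite e.
under eq_bigr do under eq_bigr do rewrite e -natz.
under eq_bigr do rewrite -natr_sum.
rewrite -natr_prod natz lez_nat => h; apply: leq_trans h _.
apply: (@leq_trans (\prod_(j < m) (m * B ^ 2))%N).
  apply: leq_prod => j _.
  apply: (@leq_trans (\sum_(i < m) B ^ 2)%N).
    apply: leq_sum => i _; by rewrite leq_exp2r.
  by rewrite sum_nat_const card_ord.
by rewrite prod_nat_const card_ord.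
Qed.
Definition tw k n (M : 'M[int]_(k, n + n)) : 'M[int]_(k, n + n) :=
  \matrix_(i, j) match split j with
                 | inl l => M i (rshift n l) | inr l => - M i (lshift n l) end.

Lemma sympl_tw k n (M : 'M[int]_(k, n + n)) (e : 'rV[int]_(n + n)) i :
  sympl e (row i M) = \sum_j tw M i j * e ord0 j.
Proof.
rewrite /sympl big_split_ord /= big_split /=; congr (_ + _); apply: eq_bigr => l _.
  by rewrite !mxE (unsplitK (inl l) : split (lshift n l) = inl l).
by rewrite !mxE (unsplitK (inr l) : split (rshift n l) = inr l) mulNr.
Qed.

Lemma tw_bound k n (M : 'M[int]_(k, n + n)) i j : (`|tw M i j| <= maxabs M)%N.
Proof.
rewrite mxE /maxabs; apply: leq_trans (leq_bigmax i).
by case: (split j) => l; rewrite ?abszN; exact: (leq_bigmax (F := fun j => `|M i j|%N)).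
Qed.

Lemma tw_congr r (pr : prime r) k n (S M : 'M[int]_(k, n + n)) :
  (forall i j, ((M i j - S i j) %% r%:Z)%Z = 0) ->
  forall i j, ((tw S i j)%:~R : 'F_r) = (tw M i j)%:~R.
Proof.
move=> h.
have hS : forall i j, ((S i j)%:~R : 'F_r) = (M i j)%:~R.
  move=> i j; have := h i j; move/eqP; rewrite Fp_int // rmorphB /= subr_eq0.
  by move=> /eqP ->.
by move=> i j; rewrite !mxE; case: (split j) => l; rewrite ?rmorphN /= hS.
Qed.

Lemma sum_J (R : comNzRingType) N0 (J : {set 'I_N0}) (g h : 'I_N0 -> R) :
  (forall j, j \notin J -> h j = 0) ->
  \sum_j g j * h j = \sum_(t < #|J|) g (enum_val t) * h (enum_val t).
Proof.
move=> h0; rewrite (bigID (mem J)) /= [X in _ + X]big1 ?addr0; last first.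
  by move=> j /h0 ->; rewrite mulr0.
exact: big_enum_val.
Qed.
Local Close Scope ring_scope.
Theorem theorem3 (q n k d : nat) (S M : 'M[int]_(k, n + n)) :
  prime q ->
  stabilizer_gen q S ->
  has_distance q S d ->
  nondeg_code q S d ->
  invariant_form q S M ->
  forall p : nat, prime p ->
    (maxabs M ^ (2 * (d - 1)) * (2 * (d - 1)) ^ (d - 1) < p)%N ->
    stabilizer_gen p M /\
    forall e : 'rV[int]_(n + n), undetectable p M e -> (d <= wt p e)%N.
Proof.
Local Open Scope ring_scope.
move=> qpr Sst [_ hdist] _ [hMS hMM] p ppr hp.
split; first by move=> i j; rewrite hMM mod0z.
move=> e [enz eort].
rewrite leqNgt; apply/negP => wlt.
set B := maxabs M.
set J := [set j | (e ord0 j %% p%:Z)%Z != 0].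
set m := #|J|.
set A := tw M.
have eout : forall j, j \notin J -> ((e ord0 j)%:~R : 'F_p) = 0.
  by move=> j; rewrite inE negbK Fp_int // => /eqP.
have eJ : forall j, j \in J -> ((e ord0 j)%:~R : 'F_p) != 0.
  by move=> j; rewrite inE Fp_int.
set W := [set l : 'I_n | ((e ord0 (lshift n l) %% p%:Z)%Z != 0)
                  || ((e ord0 (rshift n l) %% p%:Z)%Z != 0)].
have hwt : wt p e = #|W| by [].
have mle : (m <= 2 * wt p e)%N.
  rewrite hwt mul2n -addnn.
  have hsub : (m <= #|lshift n @: W :|: @rshift n n @: W|)%N.
    apply: subset_leq_card; apply/subsetP => j; rewrite inE.
    rewrite -(splitK j); case: (split j) => l /= hl; rewrite inE; apply/orP;
      [left|right]; apply: imset_f; rewrite inE hl ?orbT //.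
  apply: (leq_trans hsub); apply: (leq_trans (leq_card_setU _ _)).
  by rewrite leq_add // leq_imset_card.
have mle' : (m <= 2 * (d - 1))%N by lia.
have [j0 j0J] : exists j0, j0 \in J.
  by case/existsP: enz => j hj; exists j; rewrite inE.
have mpos : (0 < m)%N by apply/card_gt0P; exists j0.
pose Aq : 'M['F_q]_(k, m) := \matrix_(i, t) (A i (enum_val t))%:~R.
have ker : forall x : 'cV['F_q]_m, Aq *m x = 0 -> x = 0.
  move=> x hx; apply/eqP/negPn/negP => xn0.
  pose f : 'rV[int]_(n + n) := \row_j \sum_(t < m)
     (if j == enum_val t then ((x t 0 : nat)%:Z) else 0).
  have fval : forall t, f ord0 (enum_val t) = (x t 0 : nat)%:Z.
    move=> t; rewrite mxE (bigD1 t) //= eqxx big1 ?addr0 // => s hs.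
    by rewrite (inj_eq enum_val_inj) eq_sym (negbTE hs).
  have fout : forall j, j \notin J -> f ord0 j = 0.
    move=> j hj; rewrite mxE big1 // => t _; case: eqP => // ej.
    by move: hj; rewrite ej enum_valP.
  have fq : forall t, ((f ord0 (enum_val t))%:~R : 'F_q) = x t 0.
    by move=> t; rewrite fval -[(x t 0 : nat)%:~R]/((x t 0 : nat)%:R) Fp_natr.
  have fJ : forall j, (f ord0 j %% q%:Z)%Z != 0 -> j \in J.
    by move=> j; apply: contraR => /fout ->; rewrite mod0z.
  have fund : undetectable q S f.
    split.
      have [t xt] : exists t, x t 0 != 0.
        apply/existsP; apply: contraNT xn0 => /existsPn h.
        apply/eqP/matrixP => t j; rewrite (ord1 j) mxE.
        by move: (h t); rewrite negbK => /eqP.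
      by apply/existsP; exists (enum_val t); rewrite Fp_int // fq.
    move=> i; apply/eqP; rewrite Fp_int // sympl_tw rmorph_sum /=.
    under eq_bigr do rewrite rmorphM /= (tw_congr qpr hMS).
    rewrite (sum_J (J:=J)); last by move=> j /fout ->; rewrite ?rmorph0.
    under eq_bigr do rewrite fq.
    move/matrixP: hx => /(_ i 0); rewrite !mxE => hx0.
    apply/eqP; rewrite -[RHS]hx0; by apply: eq_bigr => t _; rewrite [in RHS]mxE.
  have h1 := hdist f fund.
  have h2 : (wt q f <= wt p e)%N.
    apply: subset_leq_card; apply/subsetP => l; rewrite !inE.
    by case/orP => /fJ; rewrite inE => ->; rewrite ?orbT.
  by move: (leq_trans h1 h2); rewrite leqNgt wlt.
have rfull : row_full Aq.
  rewrite /row_full -mxrank_tr; change (row_free Aq^T).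
  rewrite -kermx_eq0; apply/eqP/row_matrixP => r; rewrite row0.
  have hK := mulmx_ker Aq^T.
  have : row r (kermx Aq^T) *m Aq^T = 0 by rewrite -row_mul hK row0.
  move=> /(congr1 trmx); rewrite trmx_mul trmxK trmx0 => /ker /(congr1 trmx).
  by rewrite trmxK trmx0.
pose f := fullrankfun rfull.
have Funit := fullrowsub_unit rfull.
pose N : 'M[int]_m := \matrix_(i, t) A (f i) (enum_val t).
have eNq : rowsub f Aq = map_mx (intmul (1 : 'F_q)) N.
  by apply/matrixP => i t; rewrite !mxE.
have dNq : ((\det N)%:~R : 'F_q) != 0.
  by rewrite -det_intr -eNq -unitfE -unitmxE.
have dN0 : \det N != 0 by apply: contraNneq dNq => ->; rewrite rmorph0.
have hbound : (`|\det N| ^ 2 <= (m * B ^ 2) ^ m)%N.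
  by apply: det_bound => i t; rewrite mxE; exact: tw_bound.
have absD : (`|\det N| < p)%N.
  set D := `|\det N|%N.
  have Dpos : (0 < D)%N by rewrite absz_gt0.
  set L := (2 * (d - 1))%N.
  have mB : (0 < m * B ^ 2)%N.
    rewrite lt0n; apply: contraTneq hbound => ->.
    by rewrite exp0n // -ltnNge expn_gt0 Dpos.
  have LB : (0 < L * B ^ 2)%N.
    by apply: (leq_trans mB); rewrite leq_mul2r mle' orbT.
  have : (D ^ 2 < p ^ 2)%N.
    apply: (leq_ltn_trans hbound).
    apply: (@leq_ltn_trans ((L * B ^ 2) ^ L)).
      apply: (@leq_trans ((L * B ^ 2) ^ m)).
        by rewrite leq_exp2r // leq_mul2r mle' orbT.
      by rewrite leq_pexp2l.
    have -> : ((L * B ^ 2) ^ L = (B ^ L * L ^ (d - 1)) ^ 2)%N.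
      rewrite expnMn (expnMn (B ^ L)) -!expnM mulnC.
      by rewrite [(L * 2)%N]mulnC [((d - 1) * 2)%N]mulnC.
    by rewrite ltn_exp2r.
  by rewrite ltn_exp2r.
have dNp : ((\det N)%:~R : 'F_p) != 0.
  rewrite -Fp_int //; apply/eqP => /dvdz_mod0P; rewrite dvdzE /= => hdv.
  have := @dvdn_leq p `|\det N|%N; rewrite absz_gt0 dN0 => /(_ isT hdv).
  by rewrite leqNgt absD.
pose Np := map_mx (intmul (1 : 'F_p)) N.
have Npu : Np \in unitmx by rewrite unitmxE unitfE det_intr.
pose v : 'cV['F_p]_m := \col_t (e ord0 (enum_val t))%:~R.
have Nv : Np *m v = 0.
  apply/matrixP => i j; rewrite (ord1 j) !mxE.
  have := eort (f i); move/eqP; rewrite Fp_int // sympl_tw rmorph_sum /=.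
  under eq_bigr do rewrite rmorphM /=.
  rewrite (sum_J (J:=J)); last by move=> j' /eout ->.
  move=> /eqP hx0; rewrite -[RHS]hx0; apply: eq_bigr => t _.
  by rewrite !mxE.
have v0 : v = 0 by rewrite -(mulKmx Npu v) Nv mulmx0.
have := eJ j0 j0J.
have : v (enum_rank_in j0J j0) 0 = (e ord0 j0)%:~R.
  by rewrite mxE enum_rankK_in.
by rewrite v0 mxE => <-; rewrite eqxx.
Qed.
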